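(* Let $N$ be a society, $\nabla$ an ES basic fusion operator satisfying (ESF-SD), (ESF-P) and (ESF-I), and $D$ an $N$-coalition. If there exist interpretations $w\ne w'$ and $E_{w,w'},E_{w'}\in\mathcal E$ with $[\![B(E_{w,w'})]\!]=\{w,w'\}$, $[\![B(E_{w'})]\!]=\{w'\}$ such that $D$ is locally decisive for $E_{w,w'}$ against $E_{w'}$, then $D$ is a decisive $N$-coalition (i.e. decisive for $E$ against $E'$ for all $E,E'\in\mathcal E$).
   Context: Setting: epistemic space $(\mathcal E,B,\mathcal L_{\mathcal P})$ ($\mathcal E$ nonempty, $B:\mathcal E\to$ propositional formulas over finite $\mathcal P$, $|\mathcal P|\ge2$, image modulo equivalence exactly the consistent formulas; $[\![\phi]\!]$ models; $\varphi_M$ a formula with models exactly $M$); agents: well-ordered set $\mathcal S$; society: nonempty finite $N\subseteq\mathcal S$; $N$-profile $\Phi:N\to\mathcal E$, $E_i=\Phi(i)$, identified with $E_i$ if $N=\{i\}$; profiles on $\{i_1<\dots<i_n\}$, $\{j_1<\dots<j_m\}$ equivalent if $n=m$ and entries coincide position-wise. ES basic fusion operator: a map $\nabla(\Phi,E)\in\mathcal E$ with (ESF1) $B(\nabla(\Phi,E))\vdash B(E)$; (ESF2) equivalent profiles and $B(E)\equiv B(E')$ give equivalent $B(\nabla)$; (ESF3) if $B(E)\equiv B(E')\wedge B(E'')$ then $B(\nabla(\Phi,E'))\wedge B(E'')\vdash B(\nabla(\Phi,E))$; (ESF4) if moreover $B(\nabla(\Phi,E'))\wedge B(E'')\nvdash\bot$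 then $B(\nabla(\Phi,E))\vdash B(\nabla(\Phi,E'))\wedge B(E'')$. (ESF-SD): for every agent $i$, interpretations $w_1,w_2,w_3$ and $E_{w_1,w_2},E_{w_2,w_3}$ with $[\![B(E_{w_1,w_2})]\!]=\{w_1,w_2\}$, $[\![B(E_{w_2,w_3})]\!]=\{w_2,w_3\}$, there exist $i$-profiles realising each of: (i) $B(\nabla(E_i,E_{w_1,w_2}))\equiv\varphi_{w_1,w_2}$ and $B(\nabla(E_i,E_{w_2,w_3}))\equiv\varphi_{w_2,w_3}$; (ii) $\equiv\varphi_{w_1,w_2}$ and $\equiv\varphi_{w_2}$; (iii) $\equiv\varphi_{w_1}$ and $\equiv\varphi_{w_2,w_3}$; (iv) $\equiv\varphi_{w_1}$ and $\equiv\varphi_{w_2}$. (ESF-P): for every $N$, $N$-profile $\Phi$, $E,E'$: if $\bigwedge_{i\in N}B(\nabla(E_i,E))\nvdash\bot$ and $B(\nabla(E_i,E))\wedge B(E')\vdash\bot$ for all $i\in N$ then $B(\nabla(\Phi,E))\wedge B(E')\vdash\bot$. (ESF-I): for every $N$, $N$-profiles $\Phi,\Phi'$, $E$: if for every $E'$ with $B(E')\vdash B(E)$, $B(\nabla(E_j,E'))\equiv B(\nabla(E'_j,E'))$ for all $j\in N$, then $B(\nabla(\Phi,E))\equiv B(\nabla(\Phi',E))$. An $N$-coalition is a subset $D\subseteq N$. $D$ is locally decisive for $E$ against $E'$ if for every $N$-profile $\Phi$ with (i) $B(\nabla(E_i,E))\wedge B(E')\vdash\bot$ for all $i\in D$,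 (ii) $B(\nabla(E_j,E))\equiv B(E')$ for all $j\in N\setminus D$, (iii) $\bigwedge_{i\in D}B(\nabla(E_i,E))\nvdash\bot$, we have $B(\nabla(\Phi,E))\wedge B(E')\vdash\bot$. $D$ is decisive for $E$ against $E'$ if the same conclusion holds for every $N$-profile satisfying only (i) and (iii). *)

(* Defs.v *)
From Stdlib Require Import Sorted.
From HB Require Import structures.
From mathcomp Require Import all_boot.

Set Implicit Arguments.
Unset Strict Implicit.
Unset Printing Implicit Defensive.

Section Logic.
Variable P : finType.

Inductive form : Type :=
  | FVar of P
  | FTop
  | FBot
  | FNeg of form
  | FAnd of form & form
  | FOr of form & form
  | FImp of form & form.

Definition interp := {ffun P -> bool}.

Fixpoint eval (w : interp) (f : form) : bool :=
  match f with
  | FVar p => w p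
  | FTop => true
  | FBot => false
  | FNeg g => ~~ eval w g
  | FAnd g h => eval w g && eval w h
  | FOr g h => eval w g || eval w h
  | FImp g h => eval w g ==> eval w h
  end.

Definition models (f : form) : {set interp} := [set w | eval w f].

(* f |- g  (semantic consequence, = classical derivability) *)
Definition entails (f g : form) : bool := models f \subset models g.
Definition fequiv (f g : form) : Prop := models f = models g.
Definition consistent (f : form) : bool := ~~ entails f FBot.
Definition bigAnd (s : seq form) : form := foldr FAnd FTop s.
End Logic.

Definition epistemic_space (P : finType) (E : Type) (B : E -> form P) : Prop :=
  [/\ inhabited E,
      (forall e : E, consistent (B e)) &
      (forall phi : form P, consistent phi -> exists e : E, fequiv (B e) phi)].

Definition well_order (S : Type) (lt : S -> S -> Prop) : Prop :=
  [/\ well_founded lt,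
      (forall x y z, lt x y -> lt y z -> lt x z) &
      (forall x y, lt x y \/ x = y \/ lt y x)].

(* A society: a nonempty finite set of agents, represented canonically as
   its strictly increasing enumeration i_1 < ... < i_n. *)
Record society (S : Type) (lt : S -> S -> Prop) := Society {
  agents : seq S;
  agents_sorted : Sorted lt agents;
  agents_nonempty : agents <> [::] }.

Lemma cons_neq_nil (T : Type) (x : T) (l : seq T) : x :: l <> [::].
Proof. by []. Qed.

Definition single_soc (S : Type) (lt : S -> S -> Prop) (i : S) : society lt :=
  @Society S lt [:: i] (Sorted_cons (Sorted_nil lt) (HdRel_nil lt i))
           (@cons_neq_nil S i [::]).

(* An N-profile Phi : N -> E, where the agent at position k (in increasing
   order) of N is [agent_at k] and its epistemic state is [Phi k]. *)
Definition profile (S : Type) (lt : S -> S -> Prop) (E : Type)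
  (N : society lt) : Type := 'I_(size (agents N)) -> E.

Definition agent_at (S : Type) (lt : S -> S -> Prop) (N : society lt)
  (k : 'I_(size (agents N))) : S := tnth (in_tuple (agents N)) k.

(* A fusion operator maps an N-profile (for any society N) and an
   epistemic state (the integrity constraint) to an epistemic state. *)
Definition fusion_op (S : Type) (lt : S -> S -> Prop) (E : Type) : Type :=
  forall N : society lt, profile E N -> E -> E.

Definition nabla1 (S : Type) (lt : S -> S -> Prop) (E : Type)
  (nab : fusion_op lt E) (i : S) (Ei : E) (e : E) : E :=
  nab (single_soc lt i) (fun _ => Ei) e.

Section Postulates.
Variables (P : finType) (E : Type) (B : E -> form P).
Variables (S : Type) (lt : S -> S -> Prop).
Variable nab : fusion_op lt E.

Definition nab_at (N : society lt) (Phi : profile E N)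
  (k : 'I_(size (agents N))) (e : E) : E :=
  nabla1 nab (agent_at k) (Phi k) e.

Definition ES_basic_fusion : Prop :=
  [/\
      (forall (N : society lt) (Phi : profile E N) (e : E),
         entails (B (nab Phi e)) (B e)),
      (forall (N N' : society lt) (Phi : profile E N) (Phi' : profile E N')
              (e e' : E),
         size (agents N) = size (agents N') ->
         (forall (k : nat) (hk : k < size (agents N))
                 (hk' : k < size (agents N')),
            Phi (Ordinal hk) = Phi' (Ordinal hk')) ->
         fequiv (B e) (B e') ->
         fequiv (B (nab Phi e)) (B (nab Phi' e'))),
      (forall (N : society lt) (Phi : profile E N) (e e' e'' : E),
         fequiv (B e) (FAnd (B e') (B e'')) ->
         entails (FAnd (B (nab Phi e')) (B e'')) (B (nab Phi e))) &
      (forall (N : society lt) (Phi : profile E N) (e e' e'' : E),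
         fequiv (B e) (FAnd (B e') (B e'')) ->
         consistent (FAnd (B (nab Phi e')) (B e'')) ->
         entails (B (nab Phi e)) (FAnd (B (nab Phi e')) (B e'')))].

(* (ESF-SD).  [models (B x) = M] is B(x) == phi_M. *)
Definition ESF_SD : Prop :=
  forall (i : S) (w1 w2 w3 : interp P) (e12 e23 : E),
    w1 != w2 -> w2 != w3 -> w1 != w3 ->
    models (B e12) = [set w1; w2] ->
    models (B e23) = [set w2; w3] ->
    [/\ (exists Ei : E,
           models (B (nabla1 nab i Ei e12)) = [set w1; w2] /\
           models (B (nabla1 nab i Ei e23)) = [set w2; w3]),
        (exists Ei : E,
           models (B (nabla1 nab i Ei e12)) = [set w1; w2] /\
           models (B (nabla1 nab i Ei e23)) = [set w2]),
        (exists Ei : E,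
           models (B (nabla1 nab i Ei e12)) = [set w1] /\
           models (B (nabla1 nab i Ei e23)) = [set w2; w3]) &
        (exists Ei : E,
           models (B (nabla1 nab i Ei e12)) = [set w1] /\
           models (B (nabla1 nab i Ei e23)) = [set w2])].

Definition ESF_P : Prop :=
  forall (N : society lt) (Phi : profile E N) (e e' : E),
    consistent (bigAnd [seq B (nab_at Phi k e) | k <- enum 'I_(size (agents N))]) ->
    (forall k : 'I_(size (agents N)),
       entails (FAnd (B (nab_at Phi k e)) (B e')) (FBot P)) ->
    entails (FAnd (B (nab Phi e)) (B e')) (FBot P).

Definition ESF_I : Prop :=
  forall (N : society lt) (Phi Phi' : profile E N) (e : E),
    (forall e' : E, entails (B e') (B e) ->
       forall k : 'I_(size (agents N)),
         fequiv (B (nab_at Phi k e')) (B (nab_at Phi' k e'))) ->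
    fequiv (B (nab Phi e)) (B (nab Phi' e)).

(* An N-coalition D (a subset of N, given by the positions of its members)
   is locally decisive for e against e'. *)
Definition locally_decisive (N : society lt) (D : {set 'I_(size (agents N))})
  (e e' : E) : Prop :=
  forall Phi : profile E N,
    (forall k, k \in D -> entails (FAnd (B (nab_at Phi k e)) (B e')) (FBot P)) ->
    (forall k, k \notin D -> fequiv (B (nab_at Phi k e)) (B e')) ->
    consistent (bigAnd [seq B (nab_at Phi k e) | k <- enum D]) ->
    entails (FAnd (B (nab Phi e)) (B e')) (FBot P).

Definition decisive_for (N : society lt) (D : {set 'I_(size (agents N))})
  (e e' : E) : Prop :=
  forall Phi : profile E N,
    (forall k, k \in D -> entails (FAnd (B (nab_at Phi k e)) (B e')) (FBot P)) ->
    consistent (bigAnd [seq B (nab_at Phi k e) | k <- enum D]) ->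
    entails (FAnd (B (nab Phi e)) (B e')) (FBot P).

Definition decisive (N : society lt) (D : {set 'I_(size (agents N))}) : Prop :=
  forall e e' : E, @decisive_for N D e e'.
End Postulates.

(* Main.v *)
Require Import Defs.
From Stdlib Require Import Sorted.
From HB Require Import structures.
From mathcomp Require Import all_boot.
From Stdlib Require Import ClassicalEpsilon.

Set Implicit Arguments.
Unset Strict Implicit.
Unset Printing Implicit Defensive.

Section Logic2.
Variable P : finType.

Lemma models_and (f g : form P) : models (FAnd f g) = models f :&: models g.
Proof. by apply/setP => u; rewrite !inE. Qed.

Lemma models_bot : models (FBot P) = set0.
Proof. by apply/setP => u; rewrite !inE. Qed.

Lemma entailsE (f g : form P) : entails f g = (models f \subset models g).
Proof. by []. Qed.

Lemma consistentE (f : form P) : consistent f = (models f != set0).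
Proof. by rewrite /consistent /entails models_bot subset0. Qed.

Lemma entails_botE (f g : form P) :
  entails (FAnd f g) (FBot P) = (models f :&: models g == set0).
Proof. by rewrite /entails models_bot subset0 models_and. Qed.

Lemma eval_bigAnd u (s : seq (form P)) : eval u (bigAnd s) = all (eval u) s.
Proof. by elim: s => //= f s ->. Qed.

Definition lit (w : interp P) (p : P) : form P :=
  if w p then FVar p else FNeg (FVar p).

Definition charf (w : interp P) : form P :=
  foldr (fun p f => FAnd (lit w p) f) (FTop P) (enum P).

Lemma eval_charf u w : eval u (charf w) = (u == w).
Proof.
rewrite /charf.
have -> : foldr (fun p f => FAnd (lit w p) f) (FTop P) (enum P) =
  bigAnd [seq lit w p | p <- enum P] by elim: (enum P) => //= p s ->.
rewrite eval_bigAnd all_map.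
apply/idP/idP => [/allP H|/eqP ->].
  apply/eqP/ffunP => p; have := H p (mem_enum _ p); rewrite /= /lit.
  by case: (w p) => /=; case: (u p).
by apply/allP => p _ /=; rewrite /lit; case E: (w p) => /=; rewrite E.
Qed.

Definition setf (M : {set interp P}) : form P :=
  foldr (fun w f => FOr (charf w) f) (FBot P) (enum M).

Lemma models_setf M : models (setf M) = M.
Proof.
apply/setP => u; rewrite inE /setf -mem_enum.
elim: (enum M) => //= w s ->; by rewrite eval_charf inE.
Qed.

Lemma third (a b : interp P) : 1 < #|P| -> exists c : interp P, c != a /\ c != b.
Proof.
move=> HP.
case: (boolP [exists c : interp P, (c != a) && (c != b)]).
  by move/existsP=> [c /andP[]]; exists c.
rewrite negb_exists => /forallP H.
have Hs : [set: interp P] \subset [set a; b].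
  apply/subsetP => c _; have := H c; rewrite !inE negb_and !negbK.
  by case/orP => ->; rewrite ?orbT.
have := subset_leq_card Hs; rewrite cardsT card_ffun card_bool.
have := cards2 a b.
have h4 : 4 <= 2 ^ #|P|.
  by rewrite (_ : 4 = 2 ^ 2) // leq_exp2l.
move=> -> /(leq_trans h4); by case: (a != b).
Qed.

Lemma sub2_cases (X : {set interp P}) a b :
  X \subset [set a; b] -> X != set0 ->
  [\/ X = [set a], X = [set b] | X = [set a; b]].
Proof.
move=> /subsetP Hs /set0Pn [u Hu].
case Ha: (a \in X); case Hb: (b \in X).
- apply: Or33; apply/setP => v; rewrite !inE.
  apply/idP/idP => [/Hs|]; first by rewrite !inE.
  by case/orP => /eqP ->.
- apply: Or31; apply/setP => v; rewrite !inE.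
  apply/idP/idP => [Hv|/eqP -> //].
  by move: (Hs _ Hv); rewrite !inE; case/orP => /eqP E //; subst v; rewrite Hb in Hv.
- apply: Or32; apply/setP => v; rewrite !inE.
  apply/idP/idP => [Hv|/eqP -> //].
  by move: (Hs _ Hv); rewrite !inE; case/orP => /eqP E //; subst v; rewrite Ha in Hv.
- by move: (Hs _ Hu); rewrite !inE; case/orP => /eqP E; subst u; rewrite ?Ha ?Hb in Hu.
Qed.

End Logic2.

Section Main.
Variables (P : finType) (E : Type) (B : E -> form P).
Variables (S : Type) (lt : S -> S -> Prop) (nab : fusion_op lt E).
Hypothesis HES : ES_basic_fusion B nab.
Hypothesis Hcons : forall e, consistent (B e).
Hypothesis Hex : forall M : {set interp P}, M != set0 -> exists e, models (B e) = M.

Local Notation Mo e := (models (B e)).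

Lemma Mo_ne e : Mo e != set0.
Proof. by rewrite -consistentE. Qed.

Definition good (f : E -> E) :=
  [/\ forall e, Mo (f e) \subset Mo e,
      forall e e', Mo e \subset Mo e' -> Mo (f e') :&: Mo e \subset Mo (f e) &
      forall e e', Mo e \subset Mo e' -> Mo (f e') :&: Mo e != set0 ->
         Mo (f e) \subset Mo (f e') :&: Mo e].

Lemma good_nab (N : society lt) (Phi : profile E N) : good (nab Phi).
Proof.
case: HES => H1 _ H3 H4; split.
- by move=> e; rewrite -entailsE.
- move=> e e' He; rewrite -models_and -entailsE; apply: H3.
  by rewrite /fequiv models_and; apply/esym/setIidPr.
- move=> e e' He Hn; rewrite -models_and -entailsE; apply: H4.
    by rewrite /fequiv models_and; apply/esym/setIidPr.
  by rewrite consistentE models_and.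
Qed.

Section Good.
Variable f : E -> E.
Hypothesis Hf : good f.

Lemma g_sub e : Mo (f e) \subset Mo e.
Proof. by case: Hf. Qed.

Lemma g_sub2 e e' : Mo e \subset Mo e' -> Mo (f e') :&: Mo e \subset Mo (f e).
Proof. by case: Hf => _ H3 _; apply: H3. Qed.

Lemma g_restr e e' : Mo e \subset Mo e' -> Mo (f e') :&: Mo e != set0 ->
  Mo (f e) = Mo (f e') :&: Mo e.
Proof.
case: Hf => _ H3 H4 He Hn; apply/eqP; rewrite eqEsubset.
by rewrite H4 // H3.
Qed.

Lemma g_inv e e' : Mo e = Mo e' -> Mo (f e) = Mo (f e').
Proof.
case: Hf => H1 H3 _ He; apply/eqP; rewrite eqEsubset.
have A : Mo (f e') \subset Mo (f e).
  apply: subset_trans (H3 e e' _); first by rewrite subsetI subxx He H1.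
  by rewrite He.
have B' : Mo (f e) \subset Mo (f e').
  apply: subset_trans (H3 e' e _); first by rewrite subsetI subxx -He H1.
  by rewrite He.
by rewrite A B'.
Qed.

Lemma g_cases e a b : Mo e = [set a; b] ->
  [\/ Mo (f e) = [set a], Mo (f e) = [set b] | Mo (f e) = [set a; b]].
Proof. move=> He; apply: sub2_cases; by [rewrite -He g_sub | exact: Mo_ne]. Qed.

Lemma g_single e a : Mo e = [set a] -> Mo (f e) = [set a].
Proof.
move=> He; have Hs : Mo (f e) \subset [set a; a] by rewrite setUid -He g_sub.
by case: (sub2_cases Hs (Mo_ne (f e))) => //; rewrite setUid.
Qed.

Lemma in_set2E (a b u : interp P) : (u \in [set a; b]) = (u == a) || (u == b).
Proof. by rewrite !inE. Qed.

Lemma g_triple (a b c : interp P) : a != b -> b != c -> a != c ->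
  exists eT, Mo eT = [set a; b; c].
Proof. move=> *; apply: Hex; apply/set0Pn; exists a; by rewrite !inE eqxx. Qed.

Lemma sub_T (a b c : interp P) : [set a; b] \subset [set a; b; c] /\ [set b; c] \subset [set a; b; c]
   /\ [set a; c] \subset [set a; b; c].
Proof.
split; [|split]; apply/subsetP => u; rewrite !inE;
  by case/orP => ->; rewrite ?orbT.
Qed.

Lemma g_eq_inter e eT X : Mo e = X -> X \subset Mo eT ->
  (exists2 u, u \in Mo (f eT) & u \in X) -> Mo (f e) = Mo (f eT) :&: X.
Proof.
move=> He HX [u Hu HuX]; rewrite -He; apply: g_restr; rewrite He //.
by apply/set0Pn; exists u; rewrite inE Hu.
Qed.

Lemma T_gen a b c eab ebc eac eT :
  a != b -> b != c -> a != c ->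
  Mo eab = [set a; b] -> Mo ebc = [set b; c] -> Mo eac = [set a; c] ->
  Mo eT = [set a; b; c] ->
  Mo (f eT) = [set a] -> Mo (f eac) = [set a].
Proof.
move=> ab bc ac Hab Hbc Hac HT HfT.
have [s1 [s2 s3]] := sub_T a b c.
rewrite (g_eq_inter (eT := eT) Hac); rewrite ?HT //; last by exists a; rewrite ?HfT !inE eqxx.
rewrite HfT; apply/setP => u; rewrite !inE; case: eqP => // ->; by rewrite eqxx.
Qed.

Lemma notin_T X eX eT u : Mo eX = X -> X \subset Mo eT -> u \in X ->
  u \notin Mo (f eX) -> u \notin Mo (f eT).
Proof.
move=> HX Hs Hu Hn; apply/negP => Hin; move: Hn.
have Hex2 : exists2 v, v \in Mo (f eT) & v \in X by exists u.
by rewrite (g_eq_inter HX Hs Hex2) inE Hin Hu.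
Qed.

Lemma T_only a b c eT : Mo eT = [set a; b; c] -> b \notin Mo (f eT) ->
  c \notin Mo (f eT) -> Mo (f eT) = [set a].
Proof.
move=> HT nb nc.
have Hs := g_sub eT; rewrite HT in Hs.
have [u Hu] := set0Pn _ (Mo_ne (f eT)).
apply/setP => v; rewrite in_set1; apply/idP/idP => [Hv|/eqP ->].
  move/subsetP: Hs => /(_ v Hv); rewrite !inE; case/orP; [case/orP|] => // /eqP Heq; subst v.
  - by rewrite Hv in nb.
  - by rewrite Hv in nc.
have := subsetP Hs u Hu; rewrite !in_setU !in_set1; case/orP; [case/orP|] => /eqP Heq; subst u.
- by [].
- by rewrite Hu in nb.
- by rewrite Hu in nc.
Qed.

Lemma T1 a b c eab ebc eac : a != b -> b != c -> a != c ->
  Mo eab = [set a; b] -> Mo ebc = [set b; c] -> Mo eac = [set a; c] ->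
  Mo (f eab) = [set a] -> Mo (f ebc) = [set b] -> Mo (f eac) = [set a].
Proof.
move=> ab bc ac Hab Hbc Hac Fab Fbc.
have [eT HT] := g_triple ab bc ac.
have [s1 [s2 s3]] := sub_T a b c.
refine (T_gen ab bc ac Hab Hbc Hac HT _).
refine (T_only HT _ _).
  apply: (notin_T Hab); [by rewrite HT | by rewrite !inE eqxx orbT | by rewrite Fab inE eq_sym].
apply: (notin_T Hbc); [by rewrite HT | by rewrite !inE eqxx orbT | by rewrite Fbc inE eq_sym].
Qed.


Lemma T_gen2 a b c eac eT :
  Mo eac = [set a; c] -> Mo eT = [set a; b; c] ->
  a \in Mo (f eT) -> c \notin Mo (f eT) -> Mo (f eac) = [set a].
Proof.
move=> Hac HT Ha Hc.
have [s1 [s2 s3]] := sub_T a b c.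
have Hex2 : exists2 u, u \in Mo (f eT) & u \in [set a; c] by exists a; rewrite // !inE eqxx.
rewrite (g_eq_inter Hac _ Hex2) ?HT //.
apply/setP => u; rewrite in_setI in_set1 in_setU !in_set1.
case: (eqVneq u a) => [->|_]; first by rewrite Ha.
by case: (eqVneq u c) => [->|_]; rewrite ?(negbTE Hc) ?andbF.
Qed.

Lemma T2 a b c eab ebc eac : a != b -> b != c -> a != c ->
  Mo eab = [set a; b] -> Mo ebc = [set b; c] -> Mo eac = [set a; c] ->
  Mo (f eab) = [set a] -> Mo (f ebc) = [set b; c] -> Mo (f eac) = [set a].
Proof.
move=> ab bc ac Hab Hbc Hac Fab Fbc.
have [eT HT] := g_triple ab bc ac.
have [s1 [s2 s3]] := sub_T a b c.
have nb : b \notin Mo (f eT).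
  apply: (notin_T Hab); [by rewrite HT | by rewrite !inE eqxx orbT | by rewrite Fab inE eq_sym].
have nc : c \notin Mo (f eT).
  apply/negP => Hc.
  have Hex2 : exists2 u, u \in Mo (f eT) & u \in [set b; c] by exists c; rewrite // !inE eqxx orbT.
  have := g_eq_inter Hbc (eT := eT) _ Hex2; rewrite HT Fbc => /(_ s2) /setP /(_ b).
  by rewrite in_setI (negbTE nb) !in_setU !in_set1 eqxx.
have HfT := T_only HT nb nc.
by apply: (T_gen2 Hac HT) => //; rewrite HfT in_set1 eqxx.
Qed.

Lemma T3 a b c eab ebc eac : a != b -> b != c -> a != c ->
  Mo eab = [set a; b] -> Mo ebc = [set b; c] -> Mo eac = [set a; c] ->
  Mo (f eab) = [set a; b] -> Mo (f ebc) = [set b] -> Mo (f eac) = [set a].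
Proof.
move=> ab bc ac Hab Hbc Hac Fab Fbc.
have [eT HT] := g_triple ab bc ac.
have [s1 [s2 s3]] := sub_T a b c.
have nc : c \notin Mo (f eT).
  apply: (notin_T Hbc); [by rewrite HT | by rewrite !inE eqxx orbT | by rewrite Fbc inE eq_sym].
apply: (T_gen2 Hac HT _ nc).
have [u Hu] := set0Pn _ (Mo_ne (f eT)).
case: (eqVneq u a) => [<- //|ua].
have ub : u = b.
  have := subsetP (g_sub eT) u Hu; rewrite HT !in_setU !in_set1 (negbTE ua) /=.
  case/orP => /eqP Hu'; [exact Hu' | by move: nc; rewrite -Hu' Hu].
subst u.
have Hex2 : exists2 v, v \in Mo (f eT) & v \in [set a; b] by exists b; rewrite // !inE eqxx orbT.
have := g_eq_inter Hab (eT := eT) _ Hex2; rewrite HT Fab => /(_ s1) /setP /(_ a).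
by rewrite !inE eqxx /= => /esym /andP[].
Qed.

Lemma g_pick e a : Mo e = [set a] -> a \in Mo e.
Proof. by move=> ->; rewrite inE. Qed.

End Good.

Definition pref (f : E -> E) (a b : interp P) :=
  forall e, Mo e = [set a; b] -> Mo (f e) = [set a].

Lemma good_n1 i Ei : good (nabla1 nab i Ei).
Proof. exact: good_nab. Qed.

Lemma good_ag (N : society lt) (Phi : profile E N) k : good (fun e => nab_at nab Phi k e).
Proof. exact: good_n1. Qed.

Lemma pref_of f e a b : good f -> Mo e = [set a; b] -> Mo (f e) = [set a] -> pref f a b.
Proof. by move=> Hf He Hfe e' He'; rewrite (g_inv Hf (e' := e)) ?He ?He'. Qed.

Lemma st2 (a b : interp P) : exists e, Mo e = [set a; b].
Proof. apply: Hex; apply/set0Pn; exists a; by rewrite !inE eqxx. Qed.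

Lemma st1 (a : interp P) : exists e, Mo e = [set a].
Proof. apply: Hex; apply/set0Pn; exists a; by rewrite !inE eqxx. Qed.

Lemma disj1 (a b : interp P) : a != b -> [set a] :&: [set b] == set0.
Proof.
move=> ab; apply/eqP/setP => u; rewrite !inE.
by case: (eqVneq u a) => // ->; rewrite (negbTE ab) andbF.
Qed.

Lemma pair_res (X : {set interp P}) a b : a != b -> X \subset [set a; b] -> X != set0 ->
  X :&: [set b] == set0 -> X = [set a].
Proof.
move=> ab Hs Hn Hd; case: (sub2_cases Hs Hn) => // HX; move: Hd; rewrite HX.
- by rewrite setIid -cards_eq0 cards1.
- by move/eqP/setP/(_ b); rewrite !inE eqxx orbT.
Qed.

Lemma mkprof (N : society lt) (Q : 'I_(size (agents N)) -> E -> Prop) :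
  (forall k, exists Ei, Q k Ei) -> exists Phi : profile E N, forall k, Q k (Phi k).
Proof.
move=> H.
exists (fun k => proj1_sig (constructive_indefinite_description _ (H k))).
move=> k; exact: (proj2_sig (constructive_indefinite_description _ (H k))).
Qed.

Hypothesis HSD : ESF_SD B nab.
Hypothesis HP : ESF_P B nab.
Hypothesis HI : ESF_I B nab.

Section Arrow.
Variable N : society lt.
Variable D : {set 'I_(size (agents N))}.

Local Notation ag Phi k := (fun e => nab_at nab Phi k e).

Definition PD a b := forall Phi : profile E N,
  (forall k, k \in D -> pref (ag Phi k) a b) -> pref (nab Phi) a b.
Definition AL a b := forall Phi : profile E N,
  (forall k, k \in D -> pref (ag Phi k) a b) ->
  (forall k, k \notin D -> pref (ag Phi k) b a) -> pref (nab Phi) a b.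

Lemma pareto (Phi : profile E N) a b : a != b ->
  (forall k, pref (ag Phi k) a b) -> pref (nab Phi) a b.
Proof.
move=> ab H.
have [e He] := st2 a b; have [e' He'] := st1 b.
apply: (pref_of (good_nab Phi) He).
have := @HP N Phi e e'; rewrite entails_botE He' => C.
apply: (pair_res ab); [by rewrite -He (g_sub (good_nab Phi)) | exact: Mo_ne | apply: C].
  rewrite consistentE; apply/set0Pn; exists a; rewrite inE eval_bigAnd.
  rewrite all_map; apply/allP => k _ /=.
  by have := g_pick (H k e He); rewrite inE.
by move=> k; rewrite entails_botE He' (H k e He) disj1.
Qed.

Lemma iia (Phi Phi' : profile E N) a b : a != b ->
  (forall k e, Mo e = [set a; b] -> Mo (nab_at nab Phi k e) = Mo (nab_at nab Phi' k e)) ->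
  pref (nab Phi) a b -> pref (nab Phi') a b.
Proof.
move=> ab H Hp.
have [e He] := st2 a b.
apply: (pref_of (good_nab Phi') He).
have := @HI N Phi Phi' e; rewrite /fequiv => <-; first exact: Hp.
move=> e' Hent k; rewrite entailsE He in Hent.
case: (sub2_cases Hent (Mo_ne e')) => He'.
- by rewrite (g_single (good_ag Phi k) He') (g_single (good_ag Phi' k) He').
- by rewrite (g_single (good_ag Phi k) He') (g_single (good_ag Phi' k) He').
- exact: H.
Qed.

Lemma AL_of_ld w w' Eww' Ew' : w != w' -> Mo Eww' = [set w; w'] -> Mo Ew' = [set w'] ->
  locally_decisive B nab D Eww' Ew' -> AL w w'.
Proof.
move=> ww HE HE' LD Phi HD HO.
apply: (pref_of (good_nab Phi) HE).
have := LD Phi; rewrite entails_botE HE' => C.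
apply: (pair_res ww); [by rewrite -HE (g_sub (good_nab Phi)) | exact: Mo_ne | apply: C].
- by move=> k kD; rewrite entails_botE HE' (HD k kD Eww' HE) disj1.
- move=> k kD; rewrite /fequiv HE'; apply: (HO k kD); by rewrite HE setUC.
- rewrite consistentE; apply/set0Pn; exists w; rewrite inE eval_bigAnd.
  rewrite all_map; apply/allP => k kD /=; rewrite mem_enum in kD.
  by have := g_pick (HD k kD Eww' HE); rewrite inE.
Qed.


Lemma R1 x y z : AL x y -> x != y -> z != x -> z != y -> PD x z.
Proof.
move=> Hal xy zx zy Phi HD.
have xz : x != z by rewrite eq_sym.
have yz : y != z by rewrite eq_sym.
have yx : y != x by rewrite eq_sym.
have [exy Hxy] := st2 x y; have [eyz Hyz] := st2 y z; have [exz Hxz] := st2 x z.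
have Hyx : Mo exy = [set y; x] by rewrite Hxy setUC.
have Hzx : Mo exz = [set z; x] by rewrite Hxz setUC.
have Hall : forall k : 'I_(size (agents N)), exists Ei : E,
  [/\ Mo (nabla1 nab (agent_at k) Ei exy) = (if k \in D then [set x] else [set y]),
      Mo (nabla1 nab (agent_at k) Ei eyz) = [set y] &
      Mo (nabla1 nab (agent_at k) Ei exz) = Mo (nab_at nab Phi k exz)].
  move=> k; case: (boolP (k \in D)) => Hk.
    have Fk := HD k Hk exz Hxz.
    have [_ _ _ [Ei [h1 h2]]] := HSD (agent_at k) xy yz xz Hxy Hyz.
    exists Ei; split => //; rewrite Fk.
    exact: (T1 (good_n1 _ _) xy yz xz Hxy Hyz Hxz h1 h2).
  case: (g_cases (good_ag Phi k) Hxz) => Fk; rewrite Fk.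
  - have [_ _ _ [Ei [h1 h2]]] := HSD (agent_at k) yx xz yz Hyx Hxz.
    exists Ei; split => //.
    exact: (T1 (good_n1 _ _) yx xz yz Hyx Hxz Hyz h1 h2).
  - have [_ _ _ [Ei [h1 h2]]] := HSD (agent_at k) yz zx yx Hyz Hzx.
    exists Ei; split => //.
    exact: (T1 (good_n1 _ _) yz zx yx Hyz Hzx Hyx h1 h2).
  - have [_ _ [Ei [h1 h2]] _] := HSD (agent_at k) yx xz yz Hyx Hxz.
    exists Ei; split => //.
    exact: (T2 (good_n1 _ _) yx xz yz Hyx Hxz Hyz h1 h2).
have [Phi2 HPhi2] := mkprof Hall.
have G : pref (nab Phi2) x z.
  have h1 : pref (nab Phi2) x y.
    apply: Hal => [k Hk|k Hk].
      apply: (pref_of (good_ag Phi2 k) Hxy); by case: (HPhi2 k); rewrite Hk.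
    apply: (pref_of (good_ag Phi2 k) Hyx); by case: (HPhi2 k); rewrite (negbTE Hk).
  have h2 : pref (nab Phi2) y z.
    apply: pareto => // k; apply: (pref_of (good_ag Phi2 k) Hyz); by case: (HPhi2 k).
  apply: (pref_of (good_nab Phi2) Hxz).
  exact: (T1 (good_nab Phi2) xy yz xz Hxy Hyz Hxz (h1 _ Hxy) (h2 _ Hyz)).
apply: (iia xz _ G) => k e He.
rewrite (g_inv (good_ag Phi2 k) (e' := exz)) ?He ?Hxz //.
rewrite (g_inv (good_ag Phi k) (e' := exz)) ?He ?Hxz //.
by case: (HPhi2 k).
Qed.

Lemma R2 x y z : AL x y -> x != y -> z != x -> z != y -> PD z y.
Proof.
move=> Hal xy zx zy Phi HD.
have xz : x != z by rewrite eq_sym.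
have yz : y != z by rewrite eq_sym.
have yx : y != x by rewrite eq_sym.
have [exy Hxy] := st2 x y; have [ezx Hzx] := st2 z x; have [ezy Hzy] := st2 z y.
have Hyx : Mo exy = [set y; x] by rewrite Hxy setUC.
have Hyz : Mo ezy = [set y; z] by rewrite Hzy setUC.
have Hall : forall k : 'I_(size (agents N)), exists Ei : E,
  [/\ Mo (nabla1 nab (agent_at k) Ei exy) = (if k \in D then [set x] else [set y]),
      Mo (nabla1 nab (agent_at k) Ei ezx) = [set z] &
      Mo (nabla1 nab (agent_at k) Ei ezy) = Mo (nab_at nab Phi k ezy)].
  move=> k; case: (boolP (k \in D)) => Hk.
    have Fk := HD k Hk ezy Hzy.
    have [_ _ _ [Ei [h1 h2]]] := HSD (agent_at k) zx xy zy Hzx Hxy.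
    exists Ei; split => //; rewrite Fk.
    exact: (T1 (good_n1 _ _) zx xy zy Hzx Hxy Hzy h1 h2).
  case: (g_cases (good_ag Phi k) Hzy) => Fk; rewrite Fk.
  - have [_ _ _ [Ei [h1 h2]]] := HSD (agent_at k) zy yx zx Hzy Hyx.
    exists Ei; split => //.
    exact: (T1 (good_n1 _ _) zy yx zx Hzy Hyx Hzx h1 h2).
  - have [_ _ _ [Ei [h1 h2]]] := HSD (agent_at k) yz zx yx Hyz Hzx.
    exists Ei; split => //.
    exact: (T1 (good_n1 _ _) yz zx yx Hyz Hzx Hyx h1 h2).
  - have [_ [Ei [h1 h2]] _ _] := HSD (agent_at k) zy yx zx Hzy Hyx.
    exists Ei; split => //.
    exact: (T3 (good_n1 _ _) zy yx zx Hzy Hyx Hzx h1 h2).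
have [Phi2 HPhi2] := mkprof Hall.
have G : pref (nab Phi2) z y.
  have h1 : pref (nab Phi2) x y.
    apply: Hal => [k Hk|k Hk].
      apply: (pref_of (good_ag Phi2 k) Hxy); by case: (HPhi2 k); rewrite Hk.
    apply: (pref_of (good_ag Phi2 k) Hyx); by case: (HPhi2 k); rewrite (negbTE Hk).
  have h2 : pref (nab Phi2) z x.
    apply: pareto => // k; apply: (pref_of (good_ag Phi2 k) Hzx); by case: (HPhi2 k).
  apply: (pref_of (good_nab Phi2) Hzy).
  exact: (T1 (good_nab Phi2) zx xy zy Hzx Hxy Hzy (h2 _ Hzx) (h1 _ Hxy)).
apply: (iia zy _ G) => k e He.
rewrite (g_inv (good_ag Phi2 k) (e' := ezy)) ?He ?Hzy //.
rewrite (g_inv (good_ag Phi k) (e' := ezy)) ?He ?Hzy //.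
by case: (HPhi2 k).
Qed.


Lemma PD_AL a b : PD a b -> AL a b.
Proof. by move=> H Phi HD _; apply: H. Qed.

Hypothesis Ht : forall a b : interp P, exists c, c != a /\ c != b.

Lemma chain w w' : AL w w' -> w != w' -> forall v u, v != u -> PD v u.
Proof.
move=> Hal ww.
have G : forall u, u != w -> PD w u.
  move=> u uw; case: (eqVneq u w') => [->|uw'].
    have [z [zw zw']] := Ht w w'.
    have Hz := R1 Hal ww zw zw'.
    apply: (R1 (PD_AL Hz)); by rewrite // eq_sym.
  exact: (R1 Hal ww uw uw').
move=> v u vu; case: (eqVneq v w) => [Hvw|vw]; first by subst v; apply: G; rewrite eq_sym.
case: (eqVneq u w) => [uw|uw].
  subst u.
  have [z [zv zw]] := Ht v w.
  have Hz := G z zw.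
  have Hvz : PD v z by apply: (R2 (PD_AL Hz)); rewrite // eq_sym.
  apply: (R1 (PD_AL Hvz)); by rewrite // eq_sym.
apply: (R2 (PD_AL (G u uw))); by rewrite // eq_sym.
Qed.

Lemma final w w' Eww' Ew' : w != w' -> Mo Eww' = [set w; w'] -> Mo Ew' = [set w'] ->
  locally_decisive B nab D Eww' Ew' -> decisive B nab D.
Proof.
move=> ww HE HE' LD e e' Phi HD Hc.
have Hal := AL_of_ld ww HE HE' LD.
have Hpd := chain Hal ww.
rewrite entails_botE; apply/eqP/setP => u; rewrite in_set0; apply/negP => /setIP[Hu1 Hu2].
case: (set_0Vmem D) => [D0 | [k0 k0D]].
  have [e2 He2] := st2 w w'.
  have He2' : Mo e2 = [set w'; w] by rewrite He2 setUC.
  have nD : forall k, k \in D -> pref (fun e => nab_at nab Phi k e) w w'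
    by move=> k; rewrite D0 inE.
  have nD' : forall k, k \in D -> pref (fun e => nab_at nab Phi k e) w' w
    by move=> k; rewrite D0 inE.
  have h1 := Hpd w w' ww Phi nD e2 He2.
  have ww' : w' != w by rewrite eq_sym.
  have h2 := Hpd w' w ww' Phi nD' e2 He2'.
  move: h1; rewrite h2 => /setP /(_ w); rewrite !inE eqxx => Hw.
  by rewrite Hw in ww.
move: Hc; rewrite consistentE => /set0Pn [v]; rewrite inE eval_bigAnd all_map => /allP Hv.
have vk : forall k, k \in D -> v \in Mo (nab_at nab Phi k e).
  by move=> k kD; rewrite inE; apply: (Hv k); rewrite mem_enum.
have disj : forall k, k \in D -> forall x, x \in Mo (nab_at nab Phi k e) -> x \in Mo e' -> False.
  move=> k kD x Hx1 Hx2; have := HD k kD; rewrite entails_botE => /eqP /setP /(_ x).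
  by rewrite in_set0 in_setI Hx1 Hx2.
have vu : v != u by apply/eqP => Hvu; subst v; exact: (disj k0 k0D u (vk k0 k0D) Hu2).
have ve : v \in Mo e := subsetP (g_sub (good_ag Phi k0) e) v (vk k0 k0D).
have ue : u \in Mo e := subsetP (g_sub (good_nab Phi) e) u Hu1.
have [e2 He2] := st2 v u.
have s2 : Mo e2 \subset Mo e.
  by apply/subsetP => x; rewrite He2 !in_setU !in_set1 => /orP [] /eqP ->.
have HDk : forall k, k \in D -> pref (fun e => nab_at nab Phi k e) v u.
  move=> k kD; apply: (pref_of (good_ag Phi k) He2).
  have Hex2 : exists2 x, x \in Mo (nab_at nab Phi k e) & x \in [set v; u]
    by exists v; rewrite ?vk // !inE eqxx.
  rewrite (g_eq_inter (good_ag Phi k) He2 _ Hex2); last by rewrite -He2.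
  apply/setP => x; rewrite in_setI !in_setU !in_set1.
  case: (eqVneq x v) => [->|xv]; first by rewrite vk.
  case: (eqVneq x u) => [->|_]; last by rewrite andbF.
  by rewrite andbT; apply/negP => Hu; exact: (disj k kD u Hu Hu2).
have Fe2 := Hpd v u vu Phi HDk e2 He2.
have := subsetP (g_sub2 (good_nab Phi) s2) u; rewrite Fe2 in_setI Hu1 He2 !inE eqxx orbT.
by move=> /(_ isT) /eqP Huv; rewrite Huv eqxx in vu.
Qed.

End Arrow.
End Main.

Theorem theorem5
  (P : finType) (E : Type) (B : E -> form P)
  (S : Type) (lt : S -> S -> Prop) (nab : fusion_op lt E)
  (N : society lt) (D : {set 'I_(size (agents N))}) :
  1 < #|P| ->
  epistemic_space B ->
  well_order lt ->
  ES_basic_fusion B nab ->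
  ESF_SD B nab ->
  ESF_P B nab ->
  ESF_I B nab ->
  (exists (w w' : interp P) (Eww' Ew' : E),
     [/\ w != w',
         models (B Eww') = [set w; w'],
         models (B Ew') = [set w'] &
         @locally_decisive P E B S lt nab N D Eww' Ew']) ->
  @decisive P E B S lt nab N D.
Proof.
move=> HP1 [_ Hc Hsurj] _ HES HSD HP HI [w [w' [Eww' [Ew' [ww HE HE' LD]]]]].
have Hex : forall M : {set interp P}, M != set0 -> exists e, models (B e) = M.
  move=> M HM.
  have [e He] := Hsurj (setf M) (ltac:(by rewrite consistentE models_setf)).
  by exists e; rewrite He models_setf.
have Ht := fun a b => third a b HP1.
exact: (final HES Hc Hex HSD HP HI Ht ww HE HE' LD).
Qed.
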